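(* Let $X\in\mathbb{R}^{n\times p}$, $\beta^\star\in\mathbb{R}^p$ with support $T$, $|T|=k$, $e^\star\in\mathbb{R}^n$ with support $S$, $|S|=s$, $w\in\mathbb{R}^n$, and $y=X\beta^\star+\sqrt{n}\,e^\star+w$. Let $(\widehat\beta,\widehat e)$ be an optimal solution of the extended Lasso $$\min_{\beta\in\mathbb{R}^p,\,e\in\mathbb{R}^n}\ \frac{1}{2n}\|y-X\beta-\sqrt{n}\,e\|_2^2+\lambda_{n,\beta}\|\beta\|_1+\lambda_{n,e}\|e\|_1$$ with regularization parameters $$\lambda_{n,\beta}=\frac{2}{\gamma}\frac{\|X^{T}w\|_\infty}{n},\qquad \lambda_{n,e}=\frac{2\|w\|_\infty}{\sqrt n},$$ where $\gamma\in(0,1]$. Assume $X$ satisfies the extended restricted eigenvalue condition with constant $\kappa_l>0$ over the set $\mathbb{C}$ (defined with $\lambda=\lambda_{n,e}/\lambda_{n,\beta}$). Then the errors $h=\widehat\beta-\beta^\star$, $f=\widehat e-e^\star$ satisfy $$\|h\|_2+\|f\|_2\le 3\kappa_l^{-2}\big(\lambda_{n,\beta}\sqrt{k}+\lambda_{n,e}\sqrt{s}\big).$$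
   Context: Restricted set: for $\lambda>0$, $\mathbb{C}=\{(h,f)\in\mathbb{R}^p\times\mathbb{R}^n:\ \|h_{T^c}\|_1+\lambda\|f_{S^c}\|_1\le 3\|h_T\|_1+3\lambda\|f_S\|_1\}$, where $h_T$ denotes the restriction of $h$ to the coordinates in $T$. Extended restricted eigenvalue (extended RE) condition over $\mathbb{C}$ with constant $\kappa_l>0$: $\frac{1}{\sqrt n}\|Xh+\sqrt n f\|_2\ge\kappa_l(\|h\|_2+\|f\|_2)$ for all $(h,f)\in\mathbb{C}$. *)

(* Defs.v *)
(* statement over an arbitrary real closed field R
   (covers the reals; only algebra/order and square roots are used). *)
From HB Require Import structures.
From mathcomp Require Import all_boot all_order all_algebra.
Set Implicit Arguments. Unset Strict Implicit. Unset Printing Implicit Defensive.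
Import Order.TTheory GRing.Theory Num.Theory.
Local Open Scope ring_scope.

Section Defs.
Variable R : rcfType.

Definition l1norm m (v : 'cV[R]_m) : R := \sum_(i < m) `|v i 0|.
Definition l2norm m (v : 'cV[R]_m) : R := Num.sqrt (\sum_(i < m) v i 0 ^+ 2).
Definition linfnorm m (v : 'cV[R]_m) : R := \big[Num.max/0]_(i < m) `|v i 0|.

Definition supp m (v : 'cV[R]_m) : {set 'I_m} := [set i | v i 0 != 0].

Definition restr m (A : {set 'I_m}) (v : 'cV[R]_m) : 'cV[R]_m :=
  \col_i (if i \in A then v i 0 else 0).

Definition in_cone n p (lam : R) (T : {set 'I_p}) (S : {set 'I_n})
    (h : 'cV[R]_p) (f : 'cV[R]_n) : Prop :=
  l1norm (restr (~: T) h) + lam * l1norm (restr (~: S) f)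
  <= 3 * l1norm (restr T h) + 3 * lam * l1norm (restr S f).

Definition ext_RE n p (X : 'M[R]_(n, p)) (kappa lam : R)
    (T : {set 'I_p}) (S : {set 'I_n}) : Prop :=
  forall (h : 'cV[R]_p) (f : 'cV[R]_n), in_cone lam T S h f ->
    (Num.sqrt (n%:R))^-1 * l2norm (X *m h + Num.sqrt (n%:R) *: f)
      >= kappa * (l2norm h + l2norm f).

Definition ext_lasso_obj n p (X : 'M[R]_(n, p)) (y : 'cV[R]_n)
    (lb le : R) (beta : 'cV[R]_p) (e : 'cV[R]_n) : R :=
  (2 * n%:R)^-1 * l2norm (y - X *m beta - Num.sqrt (n%:R) *: e) ^+ 2
  + lb * l1norm beta + le * l1norm e.

Definition lam_beta n p (X : 'M[R]_(n, p)) (w : 'cV[R]_n) (gamma : R) : R :=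
  2 / gamma * (linfnorm (X^T *m w) / n%:R).
Definition lam_e n (w : 'cV[R]_n) : R := 2 * linfnorm w / Num.sqrt (n%:R).

End Defs.

(* Main.v *)
Require Import Defs.
From HB Require Import structures.
From mathcomp Require Import all_boot all_order all_algebra.
From mathcomp Require Import ring lra.
Import Order.TTheory GRing.Theory Num.Theory.
Local Open Scope ring_scope.
Set Implicit Arguments. Unset Strict Implicit.

Section H.
Variable R : rcfType.

Lemma abs_le_linf m (u : 'cV[R]_m) j : `|u j 0| <= linfnorm u.
Proof. by rewrite /linfnorm; apply: (le_bigmax _ (fun i => `|u i 0|)). Qed.

Lemma linf_ge0 m (u : 'cV[R]_m) : 0 <= linfnorm u.
Proof. by rewrite /linfnorm; apply: bigmax_ge_id. Qed.

Lemma l1_ge0 m (u : 'cV[R]_m) : 0 <= l1norm u.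
Proof. by apply: sumr_ge0 => i _. Qed.

Lemma dot_le m (u h : 'cV[R]_m) :
  \sum_i u i 0 * h i 0 <= linfnorm u * l1norm h.
Proof.
rewrite /l1norm mulr_sumr; apply: ler_sum => i _.
apply: le_trans (ler_norm _) _; rewrite normrM.
by apply: ler_wpM2r => //; apply: abs_le_linf.
Qed.

Lemma dot_mulmx n p (X : 'M[R]_(n, p)) (w : 'cV[R]_n) (h : 'cV[R]_p) :
  \sum_i w i 0 * (X *m h) i 0 = \sum_j (X^T *m w) j 0 * h j 0.
Proof.
under eq_bigr do rewrite mxE mulr_sumr.
rewrite exchange_big /=; apply: eq_bigr => j _.
rewrite mxE mulr_suml; apply: eq_bigr => i _; rewrite mxE; ring.
Qed.

Lemma sq_l2 m (v : 'cV[R]_m) : l2norm v ^+ 2 = \sum_i v i 0 ^+ 2.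
Proof. by rewrite /l2norm sqr_sqrtr // sumr_ge0 // => i _; rewrite sqr_ge0. Qed.

Lemma l2_ge0 m (v : 'cV[R]_m) : 0 <= l2norm v.
Proof. exact: sqrtr_ge0. Qed.

Lemma l1_restr m (A : {set 'I_m}) (v : 'cV[R]_m) :
  l1norm (restr A v) = \sum_(i in A) `|v i 0|.
Proof.
rewrite /l1norm (bigID (mem A)) /= [X in _ + X]big1 ?addr0.
  by apply: eq_bigr => i iA; rewrite mxE iA.
by move=> i /negbTE iA; rewrite mxE iA normr0.
Qed.

Lemma l1_split m (A : {set 'I_m}) (v : 'cV[R]_m) :
  l1norm v = l1norm (restr A v) + l1norm (restr (~: A) v).
Proof.
rewrite !l1_restr /l1norm (bigID (mem A)) /=; congr (_ + _).
by apply: eq_bigl => i; rewrite in_setC.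
Qed.

Lemma l1_supp m (bs bh : 'cV[R]_m) :
  l1norm bs - l1norm bh <=
  l1norm (restr (supp bs) (bh - bs)) - l1norm (restr (~: supp bs) (bh - bs)).
Proof.
rewrite (l1_split (supp bs) bs) (l1_split (supp bs) bh) !l1_restr.
have -> : \sum_(i in ~: supp bs) `|bs i 0| = 0.
  by apply: big1 => i; rewrite in_setC inE negbK => /eqP ->; rewrite normr0.
have -> : \sum_(i in ~: supp bs) `|bh i 0| = \sum_(i in ~: supp bs) `|(bh - bs) i 0|.
  by apply: eq_bigr => i; rewrite in_setC inE negbK => /eqP e; rewrite !mxE e subr0.
have : \sum_(i in supp bs) `|bs i 0| - \sum_(i in supp bs) `|bh i 0|
   <= \sum_(i in supp bs) `|(bh - bs) i 0|.
  rewrite -sumrB; apply: ler_sum => i _; rewrite mxE.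
  have := ler_normD (bs i 0 - bh i 0) (bh i 0); rewrite subrK distrC mxE; lra.
lra.
Qed.

Lemma cs_sum m (A : {set 'I_m}) (a : 'I_m -> R) :
  (\sum_(i in A) a i) ^+ 2 <= #|A|%:R * \sum_(i in A) a i ^+ 2.
Proof.
have E : (\sum_(i in A) a i) ^+ 2 = \sum_(i in A) \sum_(j in A) a i * a j.
  by rewrite expr2 mulr_suml; apply: eq_bigr => i _; rewrite mulr_sumr.
rewrite E.
apply: (@le_trans _ _ (\sum_(i in A) \sum_(j in A) ((a i ^+ 2 + a j ^+ 2) / 2))).
  apply: ler_sum => i _; apply: ler_sum => j _.
  have := sqr_ge0 (a i - a j); lra.
have -> : \sum_(i in A) \sum_(j in A) ((a i ^+ 2 + a j ^+ 2) / 2) =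
  \sum_(i in A) (a i ^+ 2 / 2 *+ #|A| + (\sum_(j in A) a j ^+ 2) / 2).
  apply: eq_bigr => i _; rewrite -mulr_suml big_split /= sumr_const mulrDl.
  by rewrite -mulr_natr -mulr_natr; ring.
rewrite big_split /= sumr_const.
under eq_bigr do rewrite -mulr_natr -mulrA.
rewrite -mulr_suml -mulr_natr; rewrite le_eqVlt; apply/orP; left; apply/eqP; by rewrite -mulr_natr; field.
Qed.

Lemma cs_l1 m (A : {set 'I_m}) (h : 'cV[R]_m) :
  l1norm (restr A h) <= Num.sqrt (#|A|%:R) * l2norm h.
Proof.
rewrite l1_restr /l2norm -sqrtrM // -(ger0_norm (sumr_ge0 _ (fun i _ => normr_ge0 (h i 0)))).
rewrite -sqrtr_sqr ler_sqrt; last by apply: mulr_ge0 => //; apply: sumr_ge0 => i _; apply: sqr_ge0.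
apply: le_trans (cs_sum A (fun i => `|h i 0|)) _.
apply: ler_wpM2l => //.
rewrite [X in _ <= X](bigID (mem A)) /=.
under eq_bigr do rewrite real_normK ?num_real //.
rewrite lerDl; apply: sumr_ge0 => i _; apply: sqr_ge0.
Qed.

Lemma l2_sub m (w v : 'cV[R]_m) :
  l2norm (w - v) ^+ 2 = l2norm w ^+ 2 - 2 * (\sum_i w i 0 * v i 0) + l2norm v ^+ 2.
Proof.
rewrite !sq_l2 mulr_sumr -sumrB -big_split /=; apply: eq_bigr => i _.
rewrite !mxE; ring.
Qed.

Lemma dot_split n p (X : 'M[R]_(n, p)) (w : 'cV[R]_n) (h : 'cV[R]_p) (f : 'cV[R]_n) (c : R) :
  \sum_i w i 0 * (X *m h + c *: f) i 0 =
  \sum_i w i 0 * (X *m h) i 0 + c * \sum_i w i 0 * f i 0.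
Proof.
rewrite mulr_sumr -big_split /=; apply: eq_bigr => i _; rewrite !mxE; ring.
Qed.
End H.
Unset Implicit Arguments.

Theorem theorem1 (R : rcfType) (n p : nat) (X : 'M[R]_(n, p))
    (beta_star : 'cV[R]_p) (e_star w : 'cV[R]_n) (gamma kappa : R)
    (beta_hat : 'cV[R]_p) (e_hat : 'cV[R]_n) :
  0 < gamma -> gamma <= 1 ->
  0 < kappa ->
  0 < lam_beta X w gamma -> 0 < lam_e w ->
  ext_RE X kappa (lam_e w / lam_beta X w gamma) (supp beta_star) (supp e_star) ->
  (forall (beta : 'cV[R]_p) (e : 'cV[R]_n),
     ext_lasso_obj X (X *m beta_star + Num.sqrt (n%:R) *: e_star + w)
       (lam_beta X w gamma) (lam_e w) beta_hat e_hat
     <= ext_lasso_obj X (X *m beta_star + Num.sqrt (n%:R) *: e_star + w)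
       (lam_beta X w gamma) (lam_e w) beta e) ->
  l2norm (beta_hat - beta_star) + l2norm (e_hat - e_star)
    <= 3 / kappa ^+ 2 *
       (lam_beta X w gamma * Num.sqrt (#|supp beta_star|%:R)
        + lam_e w * Num.sqrt (#|supp e_star|%:R)).
Proof.
move=> g0 g1 k0 lb0 le0 RE opt.
have nR : n%:R != 0 :> R.
  apply/negP => /eqP e; move: lb0; rewrite /lam_beta e invr0 !mulr0 ltxx //.
have n0 : 0 < n%:R :> R by rewrite lt0r nR ler0n.
set sn := Num.sqrt (n%:R : R).
have sn0 : 0 < sn by rewrite sqrtr_gt0.
have snsq : sn ^+ 2 = n%:R by rewrite sqr_sqrtr // ler0n.
have snz : sn != 0 by rewrite gt_eqF.
have gnz : gamma != 0 by rewrite gt_eqF.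
set h := beta_hat - beta_star.
set f := e_hat - e_star.
set v := X *m h + sn *: f.
set y := X *m beta_star + sn *: e_star + w.
have Heq : y - X *m beta_hat - sn *: e_hat = w - v.
  rewrite /y /v /h /f mulmxBr scalerBr.
  apply/matrixP => i j; rewrite !mxE; ring.
have Hstar : y - X *m beta_star - sn *: e_star = w.
  rewrite /y; apply/matrixP => i j; rewrite !mxE; ring.
have := opt beta_star e_star; rewrite /ext_lasso_obj -/sn -/y Heq Hstar l2_sub dot_split.
set lb := lam_beta X w gamma; set le := lam_e w.
have lbp : 0 < lb := lb0. have lep : 0 < le := le0.
set Sw := l2norm w ^+ 2; set Q := l2norm v ^+ 2.
set D1 := \sum_i w i 0 * (X *m h) i 0.
set D2 := \sum_i w i 0 * f i 0.
set L := linfnorm (X^T *m w); set W := linfnorm w.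
have HD1 : D1 <= L * l1norm h by rewrite /D1 dot_mulmx; apply: dot_le.
have HD2 : D2 <= W * l1norm f by apply: dot_le.
have L0 : 0 <= L by apply: linf_ge0.
have W0 : 0 <= W by apply: linf_ge0.
have Lq : L / n%:R = lb * gamma / 2.
  rewrite /lb /lam_beta -/L; field; rewrite ?nR ?gnz ?snz //.
have Wq : sn * W / n%:R = le / 2.
  rewrite /le /lam_e -/W -/sn -snsq; field; rewrite ?nR ?gnz ?snz //.
have E1 : (2 * n%:R)^-1 * (Sw - 2 * (D1 + sn * D2) + Q) =
    (2 * n%:R)^-1 * Sw - (D1 / n%:R + sn * D2 / n%:R) + Q / n%:R / 2.
  by field.
rewrite E1 => Hopt.
have h1 : 0 <= l1norm h by apply: l1_ge0.
have f1 : 0 <= l1norm f by apply: l1_ge0.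
have B1 : D1 / n%:R <= lb / 2 * l1norm h.
  apply: (@le_trans _ _ (L * l1norm h / n%:R)).
    by rewrite ler_pM2r ?invr_gt0.
  rewrite mulrAC Lq.
  have g2 : 0 <= 1 - gamma by rewrite subr_ge0.
  have := mulr_ge0 (mulr_ge0 (ltW lbp) g2) h1; lra.
have B2 : sn * D2 / n%:R <= le / 2 * l1norm f.
  apply: (@le_trans _ _ (sn * (W * l1norm f) / n%:R)).
    by rewrite ler_pM2r ?invr_gt0 // ler_pM2l.
  by rewrite mulrA mulrAC Wq.
have Sh := l1_split (supp beta_star) h.
have Sf := l1_split (supp e_star) f.
have Pb := l1_supp beta_star beta_hat.
have Pe := l1_supp e_star e_hat.
rewrite -/h in Pb; rewrite -/f in Pe.
set a := l1norm (restr (supp beta_star) h) in Sh Pb.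
set b := l1norm (restr (~: supp beta_star) h) in Sh Pb.
set c := l1norm (restr (supp e_star) f) in Sf Pe.
set d := l1norm (restr (~: supp e_star) f) in Sf Pe.
have Q0 : 0 <= Q / n%:R by rewrite divr_ge0 // sqr_ge0.
have G : Q / n%:R <= 3 * (lb * a + le * c) - (lb * b + le * d).
  nra.
have Cn : in_cone (le / lb) (supp beta_star) (supp e_star) h f.
  rewrite /in_cone -/a -/b -/c -/d.
  have lam : le = le / lb * lb by rewrite divfK // gt_eqF.
  set t := le / lb in lam *.
  rewrite -(ler_pM2l lbp); rewrite lam in G; nra.
have HR := RE h f Cn; rewrite -/sn -/v in HR.
set Hn := l2norm h + l2norm f in HR *.
have H0 : 0 <= Hn by rewrite addr_ge0 // l2_ge0.
have HS : (kappa * Hn) ^+ 2 <= Q / n%:R.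
  have -> : Q / n%:R = (sn^-1 * l2norm v) ^+ 2.
    by rewrite exprMn exprVn snsq mulrC.
  rewrite !expr2; apply: ler_pM => //; by rewrite mulr_ge0 // ltW.
have Ca : a <= Num.sqrt (#|supp beta_star|%:R) * l2norm h by apply: cs_l1.
have Cc : c <= Num.sqrt (#|supp e_star|%:R) * l2norm f by apply: cs_l1.
set sk := Num.sqrt (#|supp beta_star|%:R) in Ca *.
set ss := Num.sqrt (#|supp e_star|%:R) in Cc *.
have sk0 : 0 <= sk by apply: sqrtr_ge0.
have ss0 : 0 <= ss by apply: sqrtr_ge0.
have lh0 : 0 <= l2norm h by apply: l2_ge0.
have lf0 : 0 <= l2norm f by apply: l2_ge0.
have b0 : 0 <= b by apply: l1_ge0.
have d0 : 0 <= d by apply: l1_ge0.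
have T2 : le * c <= le * ss * Hn.
  apply: (@le_trans _ _ (le * (ss * l2norm f))); first by rewrite ler_pM2l.
  rewrite -mulrA ler_pM2l //. apply: ler_wpM2l => //. rewrite /Hn lerDr //.
have T1' : lb * a <= lb * sk * Hn.
  apply: (@le_trans _ _ (lb * (sk * l2norm h))); first by rewrite ler_pM2l.
  rewrite -mulrA ler_pM2l //. apply: ler_wpM2l => //. rewrite /Hn lerDl //.
have K : kappa ^+ 2 * Hn ^+ 2 <= 3 * (lb * sk + le * ss) * Hn.
  rewrite -exprMn; nra.
have B0 : 0 <= lb * sk + le * ss by rewrite addr_ge0 // mulr_ge0 // ltW.
have k2 : 0 < kappa ^+ 2 by rewrite exprn_gt0.
have -> : 3 / kappa ^+ 2 * (lb * sk + le * ss) = (3 * (lb * sk + le * ss)) / kappa ^+ 2.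
  by rewrite mulrAC.
rewrite ler_pdivlMr //.
case: (ltgtP Hn 0) => [|Hp|->]; first by rewrite ltNge H0.
  rewrite mulrC; nra.
by rewrite mul0r mulr_ge0.
Qed.
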